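(* Let $k\ge2$, let $\boldsymbol{\pi}\in\Delta_k$ with $\pi_i>0$ for all $i$, and let $f:\mathbb{R}^{k-1}_+\to\mathbb{R}$ be a differentiable convex function. For density ratio vectors $\mathbf{r}(x),\hat{\mathbf{r}}(x)\in\mathbb{R}^{k-1}_+$ (extended by $r_k=\hat r_k=1$), define class probability vectors $\boldsymbol{\eta}(x)=\Psi_{\mathrm{dr}}^{-1}(\mathbf{r}(x))$ and $\hat{\boldsymbol{\eta}}(x)=\Psi_{\mathrm{dr}}^{-1}(\hat{\mathbf{r}}(x))$, where $[\Psi_{\mathrm{dr}}^{-1}(\mathbf{r})]_i=\pi_i r_i/\sum_{j=1}^k\pi_j r_j$. Then for all $x\in\mathcal{X}$, $$\mathbf{B}_f(\boldsymbol{\eta}(x),\hat{\boldsymbol{\eta}}(x))=\frac{\pi_k}{\pi_k+\sum_{i=1}^{k-1}\pi_i r_i(x)}\,\mathbf{B}_{f^\circledast_\pi}(\mathbf{r}(x),\hat{\mathbf{r}}(x)),$$ where $f$ is evaluated on the first $k-1$ coordinates of $\boldsymbol{\eta},\hat{\boldsymbol{\eta}}$, and $f^\circledast_\pi:\mathbb{R}^{k-1}_+\to\mathbb{R}$ is $$f^\circledast_\pi(r_1,\ldots,r_{k-1})=\Big(1+\sum_{i=1}^{k-1}\pi_i r_i/\pi_k\Big)\, f\Big(\frac{\boldsymbol{\pi}_{[1:k-1]}\circ\mathbf{r}}{\pi_k+\sum_{i=1}^{k-1}\pi_i r_i}\Big).$$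
   Context: $\Delta_k=\{\mathbf{p}\in\mathbb{R}^k_{\ge0}:\mathbf{1}^\top\mathbf{p}=1\}$. $\boldsymbol{\pi}_{[1:k-1]}$ is the restriction of $\boldsymbol{\pi}$ to its first $k-1$ coordinates and $\circ$ is the elementwise product. The Bregman divergence of a differentiable convex $\phi$ is $\mathbf{B}_\phi(\mathbf{x},\mathbf{y})=\phi(\mathbf{x})-\phi(\mathbf{y})-\langle \mathbf{x}-\mathbf{y},\nabla\phi(\mathbf{y})\rangle$. *)

(* Defs.v *)
From HB Require Import structures.
From mathcomp Require Import all_boot all_order all_algebra.
From mathcomp Require Import all_classical all_reals all_analysis.
Set Implicit Arguments. Unset Strict Implicit. Unset Printing Implicit Defensive.
Import Order.TTheory GRing.Theory Num.Theory.
Import numFieldNormedType.Exports.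
Local Open Scope ring_scope.

(* Convention: k = n.+1 classes, indices 'I_n.+1; class k is ord_max.
   Vectors of R^{k-1} are row vectors 'rV[R]_n. *)

Section Defs.
Variable R : realType.

Definition in_simplex (k : nat) (p : 'I_k -> R) : Prop :=
  (forall i, 0 <= p i) /\ \sum_(i < k) p i = 1.

Definition posvec (n : nat) (v : 'rV[R]_n) : Prop := forall i, 0 < v ord0 i.

Definition convex_on_pos (n : nat) (f : 'rV[R]_n -> R) : Prop :=
  forall x y : 'rV[R]_n, posvec x -> posvec y -> forall t : R, 0 <= t <= 1 ->
    f (t *: x + (1 - t) *: y) <= t * f x + (1 - t) * f y.

Definition fst_idx (n : nat) (i : 'I_n) : 'I_n.+1 := widen_ord (leqnSn n) i.

Definition ext_dr (n : nat) (r : 'rV[R]_n) (i : 'I_n.+1) : R :=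
  if unlift ord_max i is Some j then r ord0 j else 1.

Definition psi_dr_inv (n : nat) (p : 'I_n.+1 -> R) (r : 'rV[R]_n) (i : 'I_n.+1) : R :=
  p i * ext_dr r i / \sum_(j < n.+1) p j * ext_dr r j.

Definition first_coords (n : nat) (eta : 'I_n.+1 -> R) : 'rV[R]_n :=
  \row_(i < n) eta (fst_idx i).

Definition grad (n : nat) (f : 'rV[R]_n -> R) (y : 'rV[R]_n) : 'rV[R]_n :=
  \row_(i < n) ('D_(delta_mx ord0 i) f y).

Definition bregman (n : nat) (phi : 'rV[R]_n -> R) (x y : 'rV[R]_n) : R :=
  phi x - phi y - \sum_(i < n) (x - y) ord0 i * grad phi y ord0 i.

Definition fstar (n : nat) (p : 'I_n.+1 -> R) (f : 'rV[R]_n -> R)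
    (r : 'rV[R]_n) : R :=
  (1 + \sum_(i < n) p (fst_idx i) * r ord0 i / p ord_max) *
  f (\row_(i < n) (p (fst_idx i) * r ord0 i /
        (p ord_max + \sum_(j < n) p (fst_idx j) * r ord0 j))).

End Defs.

(* Main.v *)
Require Import Defs.
From HB Require Import structures.
From mathcomp Require Import all_boot all_order all_algebra.
From mathcomp Require Import all_classical all_reals all_analysis.
From mathcomp Require Import ring lra.
Import Order.TTheory GRing.Theory Num.Theory.
Import numFieldNormedType.Exports.
Local Open Scope ring_scope.

Section Helpers.
Variables (R : realType) (n : nat).

Lemma coord_der (x v : 'rV[R]_n) i :
  derivable (fun r : 'rV[R]_n => r ord0 i) x v /\
  'D_v (fun r : 'rV[R]_n => r ord0 i) x = v ord0 i.
Proof.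
have dI := @derivable_id _ _ x v.
have := (derivable_mxP _ _ _).1 dI ord0 i => /= di.
split => //.
have := derive_mx dI; rewrite derive_id => /(congr1 (fun M : 'rV[R]_n => M ord0 i)).
by rewrite mxE => ->.
Qed.

Lemma lin_der (a : 'I_n -> R) (c : R) (x v : 'rV[R]_n) :
  derivable (fun r : 'rV[R]_n => c + \sum_i a i * r ord0 i) x v /\
  'D_v (fun r : 'rV[R]_n => c + \sum_i a i * r ord0 i) x = \sum_i a i * v ord0 i.
Proof.
have -> : (fun r : 'rV[R]_n => c + \sum_i a i * r ord0 i) =
  cst c + \sum_i (a i \*o (fun r : 'rV[R]_n => r ord0 i)).
  by apply/funext => r; rewrite /= fct_sumE.
have hd i : derivable (a i \*o (fun r : 'rV[R]_n => r ord0 i)) x v.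
  exact/derivableM/(coord_der x v i).1/derivable_cst.
split; first by apply: derivableD; [exact: derivable_cst|exact: derivable_sum].
rewrite deriveD ?derive_cst ?add0r; [|exact: derivable_cst|exact: derivable_sum].
rewrite derive_sum //; apply: eq_bigr => i _.
by have [d1 d2] := coord_der x v i; rewrite deriveMl // d2.
Qed.

Lemma derive_line (W : normedModType R) (F : 'rV[R]_n -> W) x v :
  'D_v F x = 'D_1 (fun h : R => F (h *: v + x)) 0.
Proof.
rewrite /derive scale0r add0r; congr lim.
suff -> : (fun h : R => h^-1 *: (((fun h0 : R => F (h0 *: v + x)) \o shift 0) h%:A - F x))
  = (fun h : R => h^-1 *: ((F \o shift x) (h *: v) - F x)) by [].
by apply/funext => h /=; rewrite addr0 [h%:A]mulr1.
Qed.

Lemma chain (f : 'rV[R]_n -> R) (G : 'rV[R]_n -> 'rV[R]_n) x v :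
  differentiable f (G x) -> derivable G x v ->
  derivable (f \o G) x v /\ 'D_v (f \o G) x = 'd f (G x) ('D_v G x).
Proof.
move=> df dG.
have dphi : differentiable (fun h : R => G (h *: v + x)) 0.
  by apply/derivable1_diffP; exact: (derivable1P G x v).1 dG.
have df' : differentiable f ((fun h : R => G (h *: v + x)) 0).
  by rewrite /= scale0r add0r.
have dc := differentiable_comp dphi df'.
split.
  by apply/(derivable1P (f \o G) x v).2; apply/derivable1_diffP.
rewrite derive_line [in RHS]derive_line.
rewrite (_ : (fun h : R => (f \o G) (h *: v + x)) = f \o (fun h : R => G (h *: v + x))) //.
rewrite (deriveE _ dc) (diff_comp dphi df') (deriveE _ dphi) /=.
by rewrite scale0r add0r.
Qed.

Lemma diff_grad (f : 'rV[R]_n -> R) y w : differentiable f y ->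
  'd f y w = \sum_i w ord0 i * grad f y ord0 i.
Proof.
move=> df; rewrite {1}(row_sum_delta w) linear_sum; apply: eq_bigr => i _.
by rewrite linearZ /grad mxE deriveE.
Qed.


Variables (a : 'I_n -> R) (c : R).
Definition Ls (t : 'rV[R]_n) := c + \sum_i a i * t ord0 i.
Definition Gm (t : 'rV[R]_n) : 'rV[R]_n := \row_i (a i * t ord0 i / Ls t).

Lemma entry_der (s v : 'rV[R]_n) i : Ls s != 0 ->
  derivable (fun t => Gm t ord0 i) s v /\
  'D_v (fun t => Gm t ord0 i) s =
    a i * v ord0 i / Ls s - a i * s ord0 i * (\sum_l a l * v ord0 l) / (Ls s) ^+ 2.
Proof.
move=> Ls0.
have -> : (fun t => Gm t ord0 i) =
  (a i \*o (fun t : 'rV[R]_n => t ord0 i)) * (fun t => (Ls t)^-1).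
  by apply/funext => t; rewrite /Gm mxE.
have [c1 c2] := coord_der s v i.
have [l1 l2] := lin_der a c s v.
have d1 : derivable (a i \*o (fun t : 'rV[R]_n => t ord0 i)) s v.
  exact/derivableM/c1/derivable_cst.
have d2 : derivable (fun t => (Ls t)^-1) s v by exact: derivableV.
split; first exact: derivableM.
rewrite deriveM // deriveV // deriveMl // c2.
rewrite /Ls in Ls0 *; rewrite l2 /=.
set S := c + _ in Ls0 *; set V := \sum_(l < n) _.
rewrite /GRing.scale /=.
by field.
Qed.


Lemma G_der (s v : 'rV[R]_n) : Ls s != 0 ->
  derivable Gm s v /\
  'D_v Gm s = (Ls s)^-1 *: (\row_i (a i * v ord0 i))
     - ((\sum_l a l * v ord0 l) / (Ls s) ^+ 2) *: (\row_i (a i * s ord0 i)).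
Proof.
move=> Ls0.
have dG : derivable Gm s v.
  apply/derivable_mxP => i j; rewrite (ord1 i).
  exact: (entry_der s v j Ls0).1.
split => //.
rewrite derive_mx //; apply/rowP => j; rewrite !mxE.
rewrite (entry_der s v j Ls0).2 /GRing.scale /=.
by field.
Qed.

Lemma sum_lin4 (x1 x2 x3 x4 : 'I_n -> R) k1 k2 k3 k4 :
  \sum_i (k1 * x1 i + k2 * x2 i + k3 * x3 i + k4 * x4 i) =
  k1 * \sum_i x1 i + k2 * \sum_i x2 i + k3 * \sum_i x3 i + k4 * \sum_i x4 i.
Proof. by rewrite !big_split /= -!mulr_sumr. Qed.

Lemma sum_delta (b : 'I_n -> R) j :
  \sum_i b i * (delta_mx ord0 j : 'rV[R]_n) ord0 i = b j.
Proof.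
rewrite (bigD1 j) //= big1 => [|i ij]; first by rewrite mxE !eqxx mulr1 addr0.
by rewrite mxE (negbTE ij) andbF mulr0.
Qed.


Lemma sum_delta2 (x y : 'I_n -> R) j :
  \sum_i x i * (delta_mx ord0 j : 'rV[R]_n) ord0 i * y i = x j * y j.
Proof.
under eq_bigr do rewrite mulrAC.
exact: (sum_delta (fun i => x i * y i)).
Qed.

Lemma main_gen (f : 'rV[R]_n -> R) (r s : 'rV[R]_n) :
  c != 0 -> Ls r != 0 -> Ls s != 0 -> differentiable f (Gm s) ->
  bregman f (Gm r) (Gm s) = c / Ls r *
   bregman (fun t => (1 + \sum_i a i * t ord0 i / c) * f (Gm t)) r s.
Proof.
move=> c0 Lr0 Ls0 df.
set F := fun t => _.
have Fe : F = ((fun t : 'rV[R]_n => 1 + \sum_i (a i / c) * t ord0 i) * (f \o Gm) : 'rV[R]_n -> R).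
  apply/funext => t; rewrite /F /=.
  by under eq_bigr do rewrite mulrAC.
set d := grad f (Gm s).
set U := \sum_i a i * s ord0 i * d ord0 i.
have gradF j : grad F s ord0 j = (1 + \sum_i (a i / c) * s ord0 i) *
   (Ls s)^-1 * (a j * d ord0 j) - (1 + \sum_i (a i / c) * s ord0 i) * (a j / Ls s ^+ 2) * U
   + f (Gm s) * (a j / c).
  rewrite /grad mxE Fe.
  set v := delta_mx ord0 j.
  have [l1 l2] := lin_der (fun i => a i / c) 1 s v.
  have [g1 g2] := G_der s v Ls0.
  have [h1 h2] := @chain f Gm s v df g1.
  rewrite deriveM // h2 l2 g2 linearB !linearZ /= !diff_grad //.
  have e1 (w : 'rV[R]_n) : \sum_i (\row_i0 (a i0 * w ord0 i0)) ord0 i * d ord0 i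
     = \sum_i a i * w ord0 i * d ord0 i.
    by apply: eq_bigr => i _; rewrite mxE.
  rewrite -/d !e1 -/U sum_delta2 sum_delta (sum_delta (fun i => a i / c)) /GRing.scale /=.
  ring.
set A := \sum_i a i * r ord0 i.
set B := \sum_i a i * s ord0 i.
set T := \sum_i a i * r ord0 i * d ord0 i.
have LrE : Ls r = c + A by [].
have LsE : Ls s = c + B by [].
have Cs : 1 + \sum_i a i / c * s ord0 i = 1 + B / c.
  by rewrite /B mulr_suml; congr (1 + _); apply: eq_bigr => i _; rewrite mulrAC.
have E1 : \sum_i (Gm r - Gm s) ord0 i * d ord0 i =
   (Ls r)^-1 * T + (- (Ls s)^-1) * U + 0 * T + 0 * U.
  rewrite /T /U -sum_lin4; apply: eq_bigr => i _; rewrite !mxE.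
  ring.
set K := (- ((1 + B / c) * U / Ls s ^+ 2) + f (Gm s) / c).
have E2 : \sum_j (r - s) ord0 j * grad F s ord0 j =
   ((1 + B / c) / Ls s) * T + (- ((1 + B / c) / Ls s)) * U + K * A + (- K) * B.
  rewrite /T /U /A /B -sum_lin4; apply: eq_bigr => j _; rewrite gradF Cs !mxE /K.
  rewrite -/B; ring.
rewrite /bregman -/d E1 E2 /F.
have Ar : \sum_i a i * r ord0 i / c = A / c by rewrite /A mulr_suml.
have Bs : \sum_i a i * s ord0 i / c = B / c by rewrite /B mulr_suml.
rewrite Ar Bs.
rewrite LrE LsE in Lr0 Ls0 *.
rewrite /K LsE; move: (f (Gm r)) (f (Gm s)) => x y; clearbody A B T U. field; by rewrite c0 Ls0 Lr0.
Qed.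

End Helpers.

Lemma sum_ext (R : realType) (n : nat) (p : 'I_n.+1 -> R) (r : 'rV[R]_n) :
  \sum_(j < n.+1) p j * ext_dr r j =
  p ord_max + \sum_i p (fst_idx i) * r ord0 i.
Proof.
rewrite big_ord_recr /= addrC; congr (_ + _).
  by rewrite /ext_dr unlift_none mulr1.
apply: eq_bigr => i _; congr (_ * _).
have -> : widen_ord (leqnSn n) i = lift ord_max i by apply: val_inj; rewrite [RHS]lift_max.
by rewrite /ext_dr liftK.
Qed.

Theorem proposition2 (R : realType) (n : nat) (hk : (1 <= n)%N)
  (p : 'I_n.+1 -> R) (hp : in_simplex p) (hpos : forall i, 0 < p i)
  (f : 'rV[R]_n -> R)
  (hdiff : forall y : 'rV[R]_n, posvec y -> differentiable f y)
  (hconv : convex_on_pos f)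
  (X : Type) (r rh : X -> 'rV[R]_n)
  (hr : forall x, posvec (r x)) (hrh : forall x, posvec (rh x)) :
  forall x : X,
    bregman f (first_coords (psi_dr_inv p (r x)))
              (first_coords (psi_dr_inv p (rh x)))
    = p ord_max / (p ord_max + \sum_(i < n) p (fst_idx i) * r x ord0 i)
      * bregman (fstar p f) (r x) (rh x).
Proof.
move=> x.
pose a := fun i : 'I_n => p (fst_idx i).
pose c := p ord_max.
have Lpos t : posvec t -> 0 < @Ls R n a c t.
  move=> ht; rewrite /Ls ltr_pwDl //; first exact: hpos.
  by apply: sumr_ge0 => i _; apply: mulr_ge0; apply: ltW; [exact: hpos|exact: ht].
have fc t : first_coords (psi_dr_inv p t) = @Gm R n a c t.
  apply/rowP => i; rewrite !mxE /psi_dr_inv sum_ext.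
  have -> : ext_dr t (fst_idx i) = t ord0 i.
    have -> : fst_idx i = lift ord_max i by apply: val_inj; rewrite [RHS]lift_max.
    by rewrite /ext_dr liftK.
  by [].
have fs : fstar p f = (fun t => (1 + \sum_i a i * t ord0 i / c) * f (@Gm R n a c t)) := erefl.
rewrite !fc fs.
apply: main_gen.
- by apply: lt0r_neq0; exact: hpos.
- by apply: lt0r_neq0; exact: Lpos.
- by apply: lt0r_neq0; exact: Lpos.
- apply: hdiff => i; rewrite mxE; apply: divr_gt0; last exact: Lpos.
  by apply: mulr_gt0; [exact: hpos|exact: hrh].
Qed.
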